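(* For every integer $k \geq 1$, let $\mathcal{B}(k)$ denote the greatest common divisor of all the sums $\sum_{i=1}^{k} B_{n+i}$, $n \geq 0$. Then $$\mathcal{B}(k) = \begin{cases} \tfrac{1}{2}P_{k}, & \text{if } k \text{ is even};\\ Q_{k}, & \text{if } k \text{ is odd}.\end{cases}$$
   Context: The Pell sequence $(P_n)_{n\ge0}$ is defined by $P_0=0$, $P_1=1$, $P_n = 2P_{n-1}+P_{n-2}$. The associated Pell sequence $(Q_n)_{n\ge0}$ is defined by $Q_0=1$, $Q_1=1$, $Q_n=2Q_{n-1}+Q_{n-2}$. The balancing sequence $(B_n)_{n\ge0}$ is defined by $B_0=0$, $B_1=1$, $B_n=6B_{n-1}-B_{n-2}$. *)

(* Defs.v *)
From mathcomp Require Import all_boot.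
Set Implicit Arguments. Unset Strict Implicit. Unset Printing Implicit Defensive.

Fixpoint pell (n : nat) : nat :=
  match n with
  | 0 => 0
  | 1 => 1
  | (m.+1 as k).+1 => 2 * pell k + pell m
  end.

Fixpoint apell (n : nat) : nat :=
  match n with
  | 0 => 1
  | 1 => 1
  | (m.+1 as k).+1 => 2 * apell k + apell m
  end.

(* balancing numbers: B0=0, B1=1, B(n+2)=6B(n+1)-B n (always nonnegative, increasing) *)
Fixpoint bal (n : nat) : nat :=
  match n with
  | 0 => 0
  | 1 => 1
  | (m.+1 as k).+1 => 6 * bal k - bal m
  end.

Definition balsum (k n : nat) : nat := \sum_(1 <= i < k.+1) bal (n + i).

Definition is_gcd_family (f : nat -> nat) (g : nat) : Prop :=
  (forall n, g %| f n) /\ (forall d, (forall n, d %| f n) -> d %| g).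

(* Main.v *)
Require Import Defs.
From mathcomp Require Import all_boot all_algebra zify ring lra.
Import GRing.Theory Num.Theory.

Lemma QP m : apell m + pell m = pell m.+1.
Proof.
have H : forall m, apell m + pell m = pell m.+1 /\ apell m.+1 + pell m.+1 = pell m.+2.
  elim=> [|j [H1 H2]]; first by [].
  split=> //. change (2 * apell j.+1 + apell j + (2 * pell j.+1 + pell j) = 2 * pell j.+2 + pell j.+1).
  lia.
by case: (H m).
Qed.

Lemma Aform m r : pell (m + r) = pell m * apell r + apell m * pell r.
Proof.
have H : forall r, pell (m + r) = pell m * apell r + apell m * pell r /\
    pell (m + r.+1) = pell m * apell r.+1 + apell m * pell r.+1.
  elim=> [|j [H1 H2]].
    by rewrite addn0 addn1 -QP /=; split; ring.
  split=> //. rewrite !addnS in H1 H2 *.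
  change (2 * pell (m+j).+1 + pell (m+j) = pell m * (2 * apell j.+1 + apell j) + apell m * (2 * pell j.+1 + pell j)).
  rewrite H1 H2; ring.
by case: (H r).
Qed.

Local Open Scope ring_scope.
Lemma Bstep a r :
  (pell (a+r).+1)%:Z * (apell r.+1)%:Z - (apell (a+r).+1)%:Z * (pell r.+1)%:Z
  = - ((pell (a+r))%:Z * (apell r)%:Z - (apell (a+r))%:Z * (pell r)%:Z).
Proof.
have Q j : (apell j)%:Z = (pell j.+1)%:Z - (pell j)%:Z.
  by rewrite -QP PoszD; ring.
rewrite !Q.
have E j : (pell j.+2)%:Z = 2 * (pell j.+1)%:Z + (pell j)%:Z.
  by rewrite -[pell j.+2]/(2 * pell j.+1 + pell j)%N PoszD PoszM.
rewrite !E; ring.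
Qed.

Lemma Bform a r : (-1) ^+ r * (pell a)%:Z = (pell (a+r))%:Z * (apell r)%:Z - (apell (a+r))%:Z * (pell r)%:Z.
Proof.
elim: r => [|r IH]; first by rewrite addn0 /=; ring.
by rewrite addnS Bstep -IH exprS; ring.
Qed.
Local Close Scope ring_scope.

Lemma bal2 n : 2 * bal n = pell (2 * n).
Proof.
have pS j : pell j <= pell j.+2 by rewrite -[pell j.+2]/(2 * pell j.+1 + pell j)%N; lia.
have H : forall m, 2 * bal m = pell (2 * m) /\ 2 * bal m.+1 = pell (2 * m.+1).
  elim=> [|j [H1 H2]]; first by [].
  split=> //.
  have e1 : 2 * j.+2 = (2 * j).+4 by lia.
  have e2 : 2 * j.+1 = (2 * j).+2 by lia.
  rewrite e1; rewrite e2 in H2.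
  have := pS (2 * j).
  rewrite -[pell (2*j).+4]/(2 * pell (2*j).+3 + pell (2*j).+2)%N.
  rewrite -[pell (2*j).+3]/(2 * pell (2*j).+2 + pell (2*j).+1)%N.
  rewrite -[pell (2*j).+2]/(2 * pell (2*j).+1 + pell (2*j))%N in H2 *.
  rewrite -[bal j.+2]/(6 * bal j.+1 - bal j).
  lia.
by case: (H n).
Qed.

Lemma sumform k n : 4 * balsum k n + pell (2 * n + 1) = pell (2 * n + 1 + 2 * k).
Proof.
elim: k => [|k IH]; first by rewrite /balsum big_geq // addn0.
rewrite /balsum big_nat_recr //= -/(balsum k n).
have := bal2 (n + k.+1).
have e : 2 * (n + k.+1) = (2 * n + 1 + 2 * k).+1 by lia.
have e2 : 2 * n + 1 + 2 * k.+1 = (2 * n + 1 + 2 * k).+2 by lia.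
rewrite e e2 -[pell (2 * n + 1 + 2 * k).+2]/(2 * pell (2 * n + 1 + 2 * k).+1 + pell (2 * n + 1 + 2 * k))%N.
lia.
Qed.

Lemma pell_odd n : odd (pell n) = odd n.
Proof.
have H : forall m, odd (pell m) = odd m /\ odd (pell m.+1) = odd m.+1.
  elim=> [|j [H1 H2]]; first by [].
  split=> //. rewrite -[pell j.+2]/(2 * pell j.+1 + pell j)%N oddD oddM /= H1 /=.
  by rewrite negbK.
by case: (H n).
Qed.

Lemma apell_odd n : odd (apell n).
Proof.
have H : forall m, odd (apell m) /\ odd (apell m.+1).
  elim=> [|j [H1 H2]]; first by [].
  split=> //. by rewrite -[apell j.+2]/(2 * apell j.+1 + apell j)%N oddD oddM /= H1.
by case: (H n).
Qed.

Lemma Qcop j : coprime (apell j) (apell j.+1).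
Proof.
elim: j => [|j IH]; first by [].
by rewrite /coprime -[apell j.+2]/(2 * apell j.+1 + apell j)%N gcdnMDl gcdnC.
Qed.

Lemma Pcop j : coprime (pell j) (pell j.+1).
Proof.
elim: j => [|j IH]; first by [].
by rewrite /coprime -[pell j.+2]/(2 * pell j.+1 + pell j)%N gcdnMDl gcdnC.
Qed.

Lemma Qcop2 j : coprime (apell j) (apell j.+2).
Proof.
have -> : apell j.+2 = 1 * apell j + 2 * apell j.+1.
  by rewrite -[apell j.+2]/(2 * apell j.+1 + apell j)%N; lia.
rewrite /coprime gcdnMDl -/(coprime _ _) coprimeMr Qcop andbT.
by rewrite coprime_sym prime_coprime // dvdn2 apell_odd.
Qed.

Lemma Phcop k : odd k -> coprime (pell k.+1)./2 (pell k.+3)./2.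
Proof.
move=> ok.
have e1 : (pell k.+1)./2.*2 = pell k.+1 by rewrite even_halfK // pell_odd /= ok.
set h := (pell k.+1)./2 in e1 *.
have -> : (pell k.+3)./2 = 5 * h + pell k.
  rewrite -[pell k.+3]/(2 * pell k.+2 + pell k.+1)%N.
  rewrite -[pell k.+2]/(2 * pell k.+1 + pell k)%N -e1.
  have -> : 2 * (2 * h.*2 + pell k) + h.*2 = (5 * h + pell k).*2 by rewrite -!muln2; lia.
  by rewrite doubleK.
rewrite /coprime gcdnMDl -/(coprime _ _).
apply: (@coprime_dvdl _ (pell k.+1)); first by rewrite -e1 -muln2 dvdn_mulr.
by rewrite coprime_sym Pcop.
Qed.

Lemma closed_int k n :
  if odd k then 4 * balsum k n = 2 * (pell (2*n+1+k) * apell k)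
  else 4 * balsum k n = 2 * (apell (2*n+1+k) * pell k).
Proof.
have S := sumform k n.
have A := Aform (2*n+1+k) k.
have B := Bform (2*n+1) k.
rewrite -signr_odd in B.
have e : 2 * n + 1 + k + k = 2 * n + 1 + 2 * k by lia.
rewrite e in A.
case: (odd k) B => /= B.
- rewrite mulN1r in B.
  have B' : (pell (2 * n + 1 + k) * apell k + pell (2 * n + 1) = apell (2 * n + 1 + k) * pell k)%N.
    apply/eqP; rewrite -eqz_nat PoszD !PoszM. apply/eqP.
    move: B; lia.
  lia.
- rewrite GRing.mul1r in B.
  have B' : (pell (2 * n + 1) + apell (2 * n + 1 + k) * pell k = pell (2 * n + 1 + k) * apell k)%N.
    apply/eqP; rewrite -eqz_nat PoszD !PoszM. apply/eqP.
    move: B; lia.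
  lia.
Qed.

Theorem theorem17 (k : nat) : 1 <= k ->
  is_gcd_family (balsum k) (if odd k then apell k else (pell k)./2).
Proof.
move=> _.
pose c n := if odd k then (pell (2*n+1+k))./2 else apell (2*n+1+k).
have Hc : forall n, balsum k n = (if odd k then apell k else (pell k)./2) * c n.
  move=> n; have := closed_int k n; rewrite /c.
  case ok: (odd k) => H.
  - have : (pell (2*n+1+k))./2.*2 = pell (2*n+1+k).
      by rewrite even_halfK // pell_odd oddD ok oddD oddM /=.
    rewrite -muln2; lia.
  - have : (pell k)./2.*2 = pell k by rewrite even_halfK // pell_odd ok.
    rewrite -muln2; lia.
have cop : coprime (c 0) (c 1).
  rewrite /c; case ok: (odd k).
  - have -> : (2*0+1+k = k.+1)%N by lia.
    have -> : (2*1+1+k = k.+3)%N by lia.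
    exact: Phcop.
  - have -> : (2*0+1+k = k.+1)%N by lia.
    have -> : (2*1+1+k = k.+3)%N by lia.
    exact: Qcop2.
split.
- by move=> n; rewrite Hc dvdn_mulr.
- move=> d Hd.
  have : d %| gcdn (balsum k 0) (balsum k 1) by rewrite dvdn_gcd Hd Hd.
  by rewrite !Hc -muln_gcdr (eqP cop) muln1.
Qed.
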